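(* Let $$\mathrm{V}(\ell,u)=\frac12\int_\ell^{\pi/2}\mathrm{Im}\,\log\frac{1-i\sqrt{u^2/\sin^2\sigma-1}}{1+i\sqrt{u^2/\sin^2\sigma-1}}\,\mathrm{d}\sigma,\qquad \ell\in\mathbb{R},\ u\in\mathbb{R}\setminus\{0\}.$$ Then: (i) $\mathrm{V}$ is continuous and almost everywhere differentiable on its domain; and for all $\ell\in\mathbb{R}$, $u\neq 0$: (ii) $\mathrm{V}(\ell,u)=\mathrm{V}(\ell,-u)$; (iii) $\mathrm{V}(\pi-\ell,u)=-\mathrm{V}(\ell,u)$; (iv) $\mathrm{V}(\ell,u)+\mathrm{V}(-\ell,u)=2\,\mathrm{V}(0,u)$; (v) $\mathrm{V}(\ell+k\pi,u)=\mathrm{V}(\ell,u)-2k\,\mathrm{V}(0,u)$ for all $k\in\mathbb{Z}$.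
   Context: The square root is the principal one ($\sqrt{x}=i\sqrt{|x|}$ for $x<0$) and $\log$ is the principal logarithm with branch cut along $(-\infty,0]$ (imaginary part in $(-\pi,\pi]$). The integrand is defined for $\sin\sigma\neq0$, i.e. almost everywhere. *)

(* Defs.v *)
From Stdlib Require Import Reals Lra.
From Coquelicot Require Import Coquelicot.
Open Scope R_scope.

Definition Csqrt_real (x : R) : C :=
  if Rle_dec 0 x then (sqrt x, 0) else (0, sqrt (- x)).

(* Principal argument in (-PI, PI]; this is Im of the principal logarithm
   (branch cut along (-oo,0]).  Value at 0 is irrelevant (log 0 undefined). *)
Definition Carg (z : C) : R :=
  let a := fst z in let b := snd z in
  if Rlt_dec 0 a then atan (b / a)
  else if Rlt_dec a 0 then
    (if Rle_dec 0 b then atan (b / a) + PI else atan (b / a) - PI)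
  else if Rlt_dec 0 b then PI / 2
  else if Rlt_dec b 0 then - (PI / 2)
  else 0.

Definition Imlog (z : C) : R := Carg z.

Definition Ci : C := (0, 1).

Definition Vintegrand (u s : R) : R :=
  let w := Csqrt_real (u ^ 2 / (sin s) ^ 2 - 1) in
  Imlog (Cdiv (Cminus 1 (Cmult Ci w)) (Cplus 1 (Cmult Ci w))).

Definition V (l u : R) : R := / 2 * RInt (Vintegrand u) l (PI / 2).

(* Lebesgue-null subset of R^2: for every eps > 0 it is covered by countably many
   closed rectangles of total area at most eps. *)
Definition null2 (A : R * R -> Prop) : Prop :=
  forall eps : R, 0 < eps ->
  exists a b c d : nat -> R,
    (forall n, a n <= b n /\ c n <= d n) /\
    (forall p, A p -> exists n, a n <= fst p <= b n /\ c n <= snd p <= d n) /\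
    (forall N, sum_f_R0 (fun n => (b n - a n) * (d n - c n)) N <= eps).

Definition V2 (p : R * R) : R := V (fst p) (snd p).

(* Main.v *)
Require Import Defs.
From Stdlib Require Import Reals Lra Lia ZArith.
From Coquelicot Require Import Coquelicot.
Open Scope R_scope.

Definition ft (u s : R) : R := -2 * acos (Rabs (sin s) / Rabs u).

Lemma tan2_atan (w : R) : 0 <= w -> w <> 1 ->
  tan (2 * atan w) = 2 * w / (1 - w * w).
Proof.
  intros Hw H1.
  assert (Hb := atan_bound w).
  assert (Hc : cos (atan w) <> 0).
  { apply Rgt_not_eq. apply cos_gt_0; lra. }
  assert (Ht : tan (atan w) = w) by apply atan_right_inv.
  assert (H2 : atan w <> PI/4).
  { intro E. apply H1. rewrite <- Ht, E. apply tan_PI4. }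
  rewrite tan_2a; auto.
  - rewrite Ht; reflexivity.
  - rewrite cos_2a_cos. intro E.
    assert (E2 : cos (atan w) * cos (atan w) = /2) by lra.
    (* cos^2 = 1/(1+tan^2) *)
    assert (Hs := sin2_cos2 (atan w)).
    assert (Hsc : sin (atan w) = w * cos (atan w)).
    { rewrite <- Ht at 2. unfold tan. field. auto. }
    unfold Rsqr in Hs. rewrite Hsc in Hs.
    assert (w * w = 1) by nra.
    apply H1. nra.
  - rewrite Ht. intro E. apply H1. nra.
Qed.

Lemma atan_double_lt (w : R) : 0 <= w < 1 -> atan (2 * w / (1 - w * w)) = 2 * atan w.
Proof.
  intros Hw. rewrite <- tan2_atan by lra.
  apply atan_tan.
  assert (H0 : atan 0 <= atan w).
  { destruct (Req_dec w 0) as [->|]; [lra|]. left; apply atan_increasing; lra. }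
  rewrite atan_0 in H0.
  assert (atan w < PI/4) by (rewrite <- atan_1; apply atan_increasing; lra).
  assert (Hp := PI_RGT_0). lra.
Qed.

Lemma atan_double_gt (w : R) : 1 < w -> atan (2 * w / (1 - w * w)) = 2 * atan w - PI.
Proof.
  intros Hw. rewrite <- tan2_atan by lra.
  assert (Ht : tan (2 * atan w) = tan (2 * atan w - PI)).
  { unfold tan. rewrite sin_minus, cos_minus, sin_PI, cos_PI.
    replace (sin (2 * atan w) * -1 - cos (2 * atan w) * 0) with (- sin (2 * atan w)) by ring.
    replace (cos (2 * atan w) * -1 + sin (2 * atan w) * 0) with (- cos (2 * atan w)) by ring.
    unfold Rdiv. destruct (Req_dec (cos (2 * atan w)) 0) as [E|E].
    - rewrite E. rewrite Ropp_0, Rinv_0. ring.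
    - field. auto. }
  rewrite Ht. apply atan_tan.
  assert (PI/4 < atan w) by (rewrite <- atan_1; apply atan_increasing; lra).
  assert (Hb := atan_bound w). lra.
Qed.

Lemma cdiv_real (w : R) :
  Cdiv (Cminus 1 (Cmult Ci (w, 0))) (Cplus 1 (Cmult Ci (w, 0))) =
  ((1 - w * w) / (1 + w * w), - (2 * w) / (1 + w * w)).
Proof.
  assert (0 < 1 + w * w) by nra.
  unfold Cdiv, Cminus, Cplus, Cmult, Cinv, Ci, Copp; simpl.
  apply injective_projections; simpl; field; lra.
Qed.

Lemma carg_real (w : R) : 0 <= w ->
  Carg ((1 - w * w) / (1 + w * w), - (2 * w) / (1 + w * w)) = -2 * atan w.
Proof.
  intros Hw. assert (Hd : 0 < 1 + w * w) by nra.
  unfold Carg; simpl.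
  destruct (Rlt_dec 0 ((1 - w * w) / (1 + w * w))) as [Ha|Ha].
  - assert (w < 1).
    { apply Rnot_le_lt; intro. apply (Rlt_not_le _ _ Ha).
      unfold Rdiv. apply Rmult_le_0_r. nra. left; apply Rinv_0_lt_compat; lra. }
    replace (- (2 * w) / (1 + w * w) / ((1 - w * w) / (1 + w * w)))
      with (- (2 * w / (1 - w * w))) by (field; nra).
    rewrite atan_opp, atan_double_lt; lra.
  - destruct (Rlt_dec ((1 - w * w) / (1 + w * w)) 0) as [Hb|Hb].
    + assert (1 < w).
      { apply Rnot_le_lt; intro. apply (Rlt_not_le _ _ Hb).
        unfold Rdiv. apply Rmult_le_pos. nra. left; apply Rinv_0_lt_compat; lra. }
      destruct (Rle_dec 0 (- (2 * w) / (1 + w * w))) as [Hc|Hc].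
      * exfalso. assert (- (2 * w) / (1 + w * w) < 0).
        { unfold Rdiv. apply Rmult_neg_pos. lra. apply Rinv_0_lt_compat; lra. }
        lra.
      * replace (- (2 * w) / (1 + w * w) / ((1 - w * w) / (1 + w * w)))
          with (- (2 * w / (1 - w * w))) by (field; split; nra).
        rewrite atan_opp, atan_double_gt; lra.
    + assert (E : (1 - w * w) / (1 + w * w) = 0) by lra.
      assert (Hw1 : w = 1).
      { unfold Rdiv in E. apply Rmult_integral in E. destruct E as [E|E].
        nra. exfalso; apply (Rinv_neq_0_compat (1 + w * w)); lra. }
      subst w. rewrite atan_1.
      destruct (Rlt_dec 0 (- (2 * 1) / (1 + 1 * 1))). lra.
      destruct (Rlt_dec (- (2 * 1) / (1 + 1 * 1)) 0). lra. lra.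
Qed.

Lemma acos_ge1 (y : R) : 1 <= y -> acos y = 0.
Proof.
  intros H. unfold acos. destruct (Rle_dec y (-1)); [lra|].
  destruct (Rle_dec 1 y); [reflexivity|lra].
Qed.

Lemma K1 (u s : R) : u <> 0 -> sin s <> 0 -> Vintegrand u s = ft u s.
Proof.
  intros Hu Hs. unfold Vintegrand, ft, Imlog, Csqrt_real.
  set (S := sin s) in *.
  assert (HS2 : 0 < S ^ 2) by (apply pow2_gt_0; auto).
  assert (Hu2 : 0 < u ^ 2) by (apply pow2_gt_0; auto).
  assert (HaS : 0 < Rabs S) by (apply Rabs_pos_lt; auto).
  assert (Hau : 0 < Rabs u) by (apply Rabs_pos_lt; auto).
  destruct (Rle_dec 0 (u ^ 2 / S ^ 2 - 1)) as [H|H].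
  - rewrite cdiv_real, carg_real by apply sqrt_pos.
    f_equal.
    assert (Hy : 0 < Rabs S / Rabs u) by (apply Rdiv_lt_0_compat; auto).
    rewrite acos_atan by auto. f_equal.
    assert (Hsq : (Rabs S / Rabs u)² = S ^ 2 / u ^ 2).
    { unfold Rsqr. rewrite <- (pow2_abs S), <- (pow2_abs u). field. lra. }
    apply Rsqr_inj.
    + apply sqrt_pos.
    + apply Rdiv_le_0_compat; [apply sqrt_pos | auto].
    + rewrite Rsqr_div'. rewrite !Rsqr_sqrt.
      * rewrite Hsq. rewrite <- (pow2_abs S), <- (pow2_abs u) in *.
        unfold Rsqr. field. lra.
      * rewrite Hsq. assert (S ^ 2 / u ^ 2 <= 1).
        { apply Rmult_le_reg_r with (u ^ 2 / S ^ 2). apply Rdiv_lt_0_compat; lra.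
          field_simplify; lra. }
        lra.
      * auto.
  - set (t := sqrt (- (u ^ 2 / S ^ 2 - 1))).
    assert (Ht0 : 0 <= t) by apply sqrt_pos.
    assert (Ht1 : t < 1).
    { apply Rnot_le_lt in H. unfold t. replace 1 with (sqrt 1) at 2 by apply sqrt_1. apply sqrt_lt_1_alt. split. lra.
      assert (0 < u ^ 2 / S ^ 2) by (apply Rdiv_lt_0_compat; lra). lra. }
    assert (E : Cdiv (Cminus 1 (Cmult Ci (0, t))) (Cplus 1 (Cmult Ci (0, t))) =
             ((1 + t) / (1 - t), 0)).
    { unfold Cdiv, Cminus, Cplus, Cmult, Cinv, Ci, Copp; simpl.
      apply injective_projections; simpl; field; lra. }
    match goal with |- Carg ?z = _ => assert (Ez : z = ((1 + t) / (1 - t), 0)) by exact E end. rewrite Ez. unfold Carg; simpl.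
    destruct (Rlt_dec 0 ((1 + t) / (1 - t))) as [Hp|Hp].
    + rewrite acos_ge1. unfold Rdiv. rewrite Rmult_0_l, atan_0. ring.
      assert (S ^ 2 > u ^ 2).
      { apply Rnot_le_lt in H. 
        apply Rmult_lt_reg_r with (/ S ^ 2). apply Rinv_0_lt_compat; lra.
        rewrite Rinv_r by lra. unfold Rdiv in H. lra. }
      rewrite <- (pow2_abs S), <- (pow2_abs u) in H0.
      apply Rmult_le_reg_r with (Rabs u); auto. field_simplify; [|lra]. nra.
    + exfalso. apply Hp. apply Rdiv_lt_0_compat; lra.
Qed.

Lemma acos_cont (y : R) : -1 < y -> continuity_pt acos y.
Proof.
  intros Hy.
  destruct (Rlt_or_le y 1) as [H1|H1].
  - apply derivable_continuous_pt, derivable_pt_acos; lra.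
  - destruct H1 as [H1|H1].
    + apply continuity_pt_locally. intros eps.
      exists (mkposreal (y - 1) ltac:(lra)). intros x Hx. simpl in Hx.
      unfold ball in Hx; simpl in Hx; unfold AbsRing_ball, abs, minus, plus, opp in Hx; simpl in Hx.
      rewrite !acos_ge1. rewrite Rminus_0_r, Rabs_R0. apply cond_pos. lra.
      apply Rabs_lt_between in Hx. lra.
    + subst y. apply continuity_pt_locally. intros eps.
      set (e := Rmin eps (PI/2)).
      assert (He : 0 < e) by (unfold e; apply Rmin_glb_lt; [apply cond_pos| assert (Hp:=PI_RGT_0); lra]).
      assert (Hc : cos e < 1).
      { rewrite <- cos_0. apply cos_decreasing_1; try lra; unfold e; assert (Hp := PI_RGT_0);
        assert (Rmin eps (PI/2) <= PI/2) by apply Rmin_r; lra. }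
      exists (mkposreal (1 - cos e) ltac:(lra)). intros x Hx. simpl in Hx.
      unfold ball in Hx; simpl in Hx; unfold AbsRing_ball, abs, minus, plus, opp in Hx; simpl in Hx.
      apply Rabs_lt_between in Hx.
      rewrite acos_1, Rminus_0_r.
      destruct (Rle_or_lt 1 x) as [Hx1|Hx1].
      * rewrite acos_ge1 by auto. rewrite Rabs_R0. apply cond_pos.
      * assert (Hb := acos_bound x). rewrite Rabs_pos_eq by lra.
        assert (Hep : e <= eps) by apply Rmin_l.
        assert (Hep2 : e <= PI/2) by apply Rmin_r.
        apply Rlt_le_trans with e; auto.
        assert (Hce : 0 <= cos e) by (apply cos_ge_0; lra).
        apply Rnot_le_lt. intro Hlt.
        assert (Hcx : cos (acos x) = x) by (apply cos_acos; lra).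
        destruct Hlt as [Hlt|Hlt].
        -- assert (cos (acos x) < cos e) by (apply cos_decreasing_1; lra). lra.
        -- rewrite <- Hlt in Hcx. lra.
Qed.

Lemma ft_cont2 (u0 s0 : R) : u0 <> 0 -> continuity_2d_pt ft u0 s0.
Proof.
  intros Hu. unfold ft.
  apply continuity_2d_pt_mult. apply continuity_2d_pt_const.
  apply continuity_1d_2d_pt_comp with (g := fun u s => Rabs (sin s) / Rabs u).
  - apply acos_cont. assert (0 <= Rabs (sin s0) / Rabs u0).
    { apply Rdiv_le_0_compat. apply Rabs_pos. apply Rabs_pos_lt; auto. } lra.
  - unfold Rdiv. apply continuity_2d_pt_mult.
    + apply continuity_1d_2d_pt_comp with (g := fun u s => sin s).
      apply Rcontinuity_abs.
      apply continuity_1d_2d_pt_comp with (g := fun u s => s).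
      apply continuity_sin. apply continuity_2d_pt_id2.
    + apply continuity_2d_pt_inv.
      apply continuity_1d_2d_pt_comp with (g := fun u s => u).
      apply Rcontinuity_abs. apply continuity_2d_pt_id1.
      apply Rabs_no_R0; auto.
Qed.

Lemma ft_cont (u s : R) : u <> 0 -> continuous (ft u) s.
Proof.
  intros Hu. apply continuity_pt_filterlim.
  apply continuity_pt_locally. intros eps.
  destruct (ft_cont2 u s Hu eps) as [d Hd].
  exists d. intros x Hx. apply Hd. rewrite Rminus_eq_0, Rabs_R0. apply cond_pos. exact Hx.
Qed.

Lemma ft_ex (u a b : R) : u <> 0 -> ex_RInt (ft u) a b.
Proof. intros Hu. apply (ex_RInt_continuous (V := R_CompleteNormedModule)). intros; apply ft_cont; auto. Qed.

Lemma ft_bound (u s : R) : Rabs (ft u s) <= 2 * PI.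
Proof.
  unfold ft. assert (H := acos_bound (Rabs (sin s) / Rabs u)).
  rewrite Rabs_mult. replace (Rabs (-2)) with 2 by (rewrite Rabs_left; lra).
  rewrite (Rabs_pos_eq (acos _)) by lra. lra.
Qed.

Lemma ft_RInt_correct (u a b : R) : u <> 0 -> is_RInt (ft u) a b (RInt (ft u) a b).
Proof. intros Hu. apply (RInt_correct (V := R_CompleteNormedModule)). apply ft_ex; auto. Qed.

Lemma K2_base (u a b : R) : u <> 0 -> a <= b -> (forall x, a < x < b -> sin x <> 0) ->
  is_RInt (Vintegrand u) a b (RInt (ft u) a b).
Proof.
  intros Hu Hab H. apply is_RInt_ext with (ft u).
  - intros x Hx. rewrite Rmin_left, Rmax_right in Hx by lra.
    symmetry; apply K1; auto.
  - apply ft_RInt_correct; auto.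
Qed.

Lemma no_zero (m : Z) (a b : R) : IZR m * PI <= a -> b <= (IZR m + 1) * PI ->
  forall x, a < x < b -> sin x <> 0.
Proof.
  intros Ha Hb x Hx E. destruct (sin_eq_0_0 x E) as [k Hk]. subst x.
  assert (Hp := PI_RGT_0).
  assert (H1 : IZR m < IZR k).
  { apply Rmult_lt_reg_r with PI; lra. }
  assert (H2 : IZR k < IZR m + 1).
  { apply Rmult_lt_reg_r with PI; lra. }
  rewrite <- plus_IZR in H2. apply lt_IZR in H1. apply lt_IZR in H2. lia.
Qed.

Lemma K2_ind (u : R) : u <> 0 -> forall n : nat, forall a b, a <= b ->
  b < (IZR (Zfloor (a / PI)) + 1 + INR n) * PI ->
  is_RInt (Vintegrand u) a b (RInt (ft u) a b).
Proof.
  intros Hu n. assert (Hp := PI_RGT_0). induction n as [|n IH]; intros a b Hab Hb.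
  - apply K2_base; auto. apply (no_zero (Zfloor (a / PI))).
    + destruct (Zfloor_bound (a / PI)) as [H1 H2].
      apply Rmult_le_compat_r with (r := PI) in H1; [|lra].
      replace (a / PI * PI) with a in H1 by (field; lra). lra.
    + simpl in Hb. lra.
  - set (m := Zfloor (a / PI)) in *.
    destruct (Rlt_or_le b ((IZR m + 1) * PI)) as [Hb1|Hb1].
    + apply K2_base; auto. apply (no_zero m).
      * destruct (Zfloor_bound (a / PI)) as [H1 H2].
        apply Rmult_le_compat_r with (r := PI) in H1; [|lra].
        replace (a / PI * PI) with a in H1 by (field; lra). fold m in H1. lra.
      * lra.
    + set (c := (IZR m + 1) * PI) in *.
      assert (Hac : a <= c).
      { destruct (Zfloor_bound (a / PI)) as [H1 H2]. fold m in H2.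
        apply Rmult_lt_compat_r with (r := PI) in H2; [|lra].
        replace (a / PI * PI) with a in H2 by (field; lra). unfold c; lra. }
      rewrite <- (RInt_Chasles (ft u) a c b) by (apply ft_ex; auto).
      assert (H1 : is_RInt (Vintegrand u) a c (RInt (ft u) a c)).
      { apply K2_base; auto. apply (no_zero m).
        -- destruct (Zfloor_bound (a / PI)) as [H1 H2].
           apply Rmult_le_compat_r with (r := PI) in H1; [|lra].
           replace (a / PI * PI) with a in H1 by (field; lra). fold m in H1. lra.
        -- unfold c; lra. }
      assert (H2 : is_RInt (Vintegrand u) c b (RInt (ft u) c b)).
      { apply IH; auto.
        replace (c / PI) with (IZR (m + 1)) by (unfold c; rewrite plus_IZR; field; lra).
        rewrite ZfloorZ, plus_IZR. rewrite S_INR in Hb. unfold c in *. simpl. lra. }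
      exact (is_RInt_Chasles _ _ _ _ _ _ H1 H2).
Qed.

Lemma K2 (u a b : R) : u <> 0 -> is_RInt (Vintegrand u) a b (RInt (ft u) a b).
Proof.
  intros Hu. assert (Hp := PI_RGT_0).
  assert (Hgen : forall a b, a <= b -> is_RInt (Vintegrand u) a b (RInt (ft u) a b)).
  { intros a' b' Hab.
    set (m := Zfloor (a' / PI)).
    destruct (nfloor_ex (Rmax 0 ((b' - (IZR m + 1) * PI) / PI))) as [n Hn].
    { apply Rmax_l. }
    apply (K2_ind u Hu (S n)); auto. fold m. rewrite S_INR.
    assert (H := Rmax_r 0 ((b' - (IZR m + 1) * PI) / PI)).
    assert ((b' - (IZR m + 1) * PI) / PI < INR n + 1) by lra.
    apply Rmult_lt_compat_r with (r := PI) in H0; [|lra].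
    replace ((b' - (IZR m + 1) * PI) / PI * PI) with (b' - (IZR m + 1) * PI) in H0 by (field; lra).
    nra. }
  destruct (Rle_or_lt a b) as [H|H]; auto.
  rewrite <- opp_RInt_swap by (apply ft_ex; auto).
  exact (is_RInt_swap _ _ _ _ (Hgen b a ltac:(lra))).
Qed.

Lemma V_ft (l u : R) : u <> 0 -> V l u = / 2 * RInt (ft u) l (PI / 2).
Proof. intros Hu. unfold V. f_equal. apply is_RInt_unique. apply K2; auto. Qed.

Definition I (u a b : R) : R := RInt (ft u) a b.

Lemma ft_refl u s : ft u (PI - s) = ft u s.
Proof. unfold ft. rewrite sin_PI_x. reflexivity. Qed.
Lemma ft_neg u s : ft u (- s) = ft u s.
Proof. unfold ft. rewrite sin_neg, Rabs_Ropp. reflexivity. Qed.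
Lemma ft_shift u s : ft u (s + PI) = ft u s.
Proof. unfold ft. rewrite neg_sin, Rabs_Ropp. reflexivity. Qed.

Lemma I_lin (u c d a b : R) : u <> 0 ->
  (RInt (fun y => c * ft u (c * y + d)) a b : R) = I u (c * a + d) (c * b + d).
Proof.
  intros Hu. unfold I. rewrite <- (RInt_comp_lin (V := R_CompleteNormedModule)) by (apply ft_ex; auto).
  reflexivity.
Qed.

Lemma I_chasles u a b c : u <> 0 -> I u a b + I u b c = I u a c.
Proof. intros Hu. unfold I. apply (RInt_Chasles (V := R_CompleteNormedModule)); apply ft_ex; auto. Qed.

Lemma I_scal u a b c : u <> 0 -> (RInt (fun y => c * ft u y) a b : R) = c * I u a b.
Proof. intros Hu. unfold I. apply (RInt_scal (V := R_CompleteNormedModule)); apply ft_ex; auto. Qed.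

Lemma I_refl u a b : u <> 0 -> I u (PI - a) (PI - b) = - I u a b.
Proof.
  intros Hu. replace (PI - a) with (-1 * a + PI) by ring. replace (PI - b) with (-1 * b + PI) by ring.
  rewrite <- I_lin by auto.
  rewrite (RInt_ext _ (fun y => -1 * ft u y)).
  - rewrite I_scal by auto. ring.
  - intros x _. replace (-1 * x + PI) with (PI - x) by ring. rewrite ft_refl. reflexivity.
Qed.

Lemma I_neg u a b : u <> 0 -> I u (- a) (- b) = - I u a b.
Proof.
  intros Hu. replace (- a) with (-1 * a + 0) by ring. replace (- b) with (-1 * b + 0) by ring.
  rewrite <- I_lin by auto.
  rewrite (RInt_ext _ (fun y => -1 * ft u y)).
  - rewrite I_scal by auto. ring.
  - intros x _. replace (-1 * x + 0) with (- x) by ring. rewrite ft_neg. reflexivity.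
Qed.

Lemma I_shift u a b : u <> 0 -> I u (a + PI) (b + PI) = I u a b.
Proof.
  intros Hu. replace (a + PI) with (1 * a + PI) by ring. replace (b + PI) with (1 * b + PI) by ring.
  rewrite <- I_lin by auto.
  unfold I. apply RInt_ext. intros x _. replace (1 * x + PI) with (x + PI) by ring. rewrite ft_shift. apply Rmult_1_l.
Qed.

Lemma I_point u a : I u a a = 0.
Proof. unfold I. apply (RInt_point (V := R_CompleteNormedModule)). Qed.

Lemma I_period u l : u <> 0 -> I u l (l + PI) = 2 * I u 0 (PI / 2).
Proof.
  intros Hu.
  assert (H1 := I_chasles u l 0 (l + PI) Hu).
  assert (H2 := I_chasles u 0 PI (l + PI) Hu).
  assert (H3 : I u PI (l + PI) = I u 0 l).
  { rewrite <- I_shift with (a := 0) by auto. rewrite Rplus_0_l. reflexivity. }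
  assert (H4 := I_chasles u l 0 l Hu). rewrite I_point in H4.
  assert (H5 := I_chasles u 0 (PI/2) PI Hu).
  assert (H6 : I u (PI / 2) PI = - I u (PI / 2) 0).
  { rewrite <- I_refl by auto. f_equal; field. }
  assert (H7 := I_chasles u (PI/2) 0 (PI/2) Hu). rewrite I_point in H7.
  lra.
Qed.

Lemma I_periodk u l (k : Z) : u <> 0 ->
  I u l (l + IZR k * PI) = IZR k * (2 * I u 0 (PI / 2)).
Proof.
  intros Hu.
  assert (Hn : forall n : nat, forall l, I u l (l + INR n * PI) = INR n * (2 * I u 0 (PI / 2))).
  { induction n as [|n IH]; intros l'.
    - simpl. rewrite Rmult_0_l, Rplus_0_r, I_point. ring.
    - rewrite <- (I_chasles u l' (l' + INR n * PI)) by auto. rewrite IH.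
      replace (l' + INR (S n) * PI) with ((l' + INR n * PI) + PI) by (rewrite S_INR; ring).
      rewrite I_period by auto. rewrite S_INR. ring. }
  destruct (Z.le_gt_cases 0 k) as [Hk|Hk].
  - rewrite <- (Z2Nat.id k Hk). rewrite <- INR_IZR_INZ. apply Hn.
  - assert (E : k = (- Z.of_nat (Z.to_nat (- k)))%Z) by lia.
    rewrite E, opp_IZR, <- INR_IZR_INZ.
    set (n := Z.to_nat (- k)).
    assert (H := I_chasles u (l - INR n * PI) l (l - INR n * PI) Hu). rewrite I_point in H.
    assert (H' := Hn n (l - INR n * PI)).
    replace (l - INR n * PI + INR n * PI) with l in H' by ring.
    replace (l + - INR n * PI) with (l - INR n * PI) by ring.
    lra.
Qed.

Lemma V_I l u : u <> 0 -> V l u = / 2 * I u l (PI / 2).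
Proof. apply V_ft. Qed.

Lemma part_ii l u : V l u = V l (- u).
Proof.
  unfold V. f_equal. apply RInt_ext. intros x _. unfold Vintegrand.
  replace ((- u) ^ 2) with (u ^ 2) by ring. reflexivity.
Qed.

Lemma part_iii l u : u <> 0 -> V (PI - l) u = - V l u.
Proof.
  intros Hu. rewrite !V_I by auto.
  replace (PI / 2) with (PI - PI / 2) at 1 by field. rewrite I_refl by auto. ring.
Qed.

Lemma part_iv l u : u <> 0 -> V l u + V (- l) u = 2 * V 0 u.
Proof.
  intros Hu. rewrite !V_I by auto.
  assert (H1 := I_chasles u (- l) 0 (PI / 2) Hu).
  assert (H2 : I u (- l) 0 = - I u l 0).
  { rewrite <- I_neg by auto. f_equal. ring. }
  assert (H3 := I_chasles u l 0 (PI / 2) Hu).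
  lra.
Qed.

Lemma part_v l u (k : Z) : u <> 0 -> V (l + IZR k * PI) u = V l u - 2 * IZR k * V 0 u.
Proof.
  intros Hu. rewrite !V_I by auto.
  assert (H1 := I_chasles u l (l + IZR k * PI) (PI / 2) Hu).
  rewrite I_periodk in H1 by auto. lra.
Qed.

Lemma int_approx (f : R -> R) (x0 x c M : R) :
  ex_RInt f x0 x ->
  (forall t, Rmin x0 x <= t <= Rmax x0 x -> Rabs (f t - c) <= M) ->
  Rabs (RInt f x0 x - c * (x - x0)) <= M * Rabs (x - x0).
Proof.
  intros Hex Hb.
  assert (H1 : is_RInt f x0 x (RInt f x0 x)) by (apply (RInt_correct (V := R_CompleteNormedModule)); auto).
  assert (H2 : is_RInt (fun _ => c) x0 x (scal (x - x0) c)) by apply (is_RInt_const (V := R_NormedModule)).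
  assert (H3 := is_RInt_minus _ _ _ _ _ _ H1 H2).
  assert (H4 : norm (minus (RInt f x0 x) (scal (x - x0) c)) <= Rabs (x - x0) * M).
  { apply norm_RInt_le_const_abs with (fun y => minus (f y) c). intros t Ht. exact (Hb t Ht). exact H3. }
  revert H4. unfold norm, minus, plus, opp, scal; simpl. unfold abs, mult; simpl.
  intros H4. replace (RInt f x0 x - c * (x - x0)) with (RInt f x0 x + - ((x - x0) * c)) by ring.
  rewrite (Rmult_comm M). exact H4.
Qed.

Lemma is_derive_eps (g : R -> R) (u0 c : R) : is_derive g u0 c ->
  forall eps : posreal, exists d : posreal, forall u, Rabs (u - u0) < d ->
    Rabs (g u - g u0 - c * (u - u0)) <= eps * Rabs (u - u0).
Proof.
  intros Hd eps. apply is_derive_Reals in Hd.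
  destruct (Hd eps (cond_pos eps)) as [d Hdd].
  exists d. intros u Hu.
  destruct (Req_dec u u0) as [E|E].
  - subst u. replace (g u0 - g u0 - c * (u0 - u0)) with 0 by ring. replace (u0 - u0) with 0 by ring.
    rewrite Rabs_R0. lra.
  - assert (Hh : u - u0 <> 0) by lra.
    specialize (Hdd (u - u0) Hh Hu). replace (u0 + (u - u0)) with u in Hdd by ring.
    replace (g u - g u0 - c * (u - u0)) with (((g u - g u0) / (u - u0) - c) * (u - u0)) by (field; auto).
    rewrite Rabs_mult. apply Rmult_le_compat_r. apply Rabs_pos. lra.
Qed.

Lemma lemL (h : R -> R -> R) (a x0 u0 c : R) :
  locally_2d (fun u x => ex_RInt (h u) a x) u0 x0 ->
  continuity_2d_pt h u0 x0 ->
  is_derive (fun u => RInt (h u) a x0) u0 c ->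
  differentiable_pt_lim (fun x u => RInt (h u) a x) x0 u0 (h u0 x0) c.
Proof.
  intros Hex Hc Hd eps.
  assert (He2 : 0 < eps / 2) by (assert (H := cond_pos eps); lra).
  destruct (Hc (mkposreal _ He2)) as [d1 Hd1].
  destruct (is_derive_eps _ _ _ Hd (mkposreal _ He2)) as [d2 Hd2].
  destruct Hex as [d3 Hd3].
  set (d := Rmin d1 (Rmin d2 d3)).
  assert (Hd0 : 0 < d) by (unfold d; repeat apply Rmin_glb_lt; apply cond_pos).
  exists (mkposreal d Hd0). simpl. intros x u Hx Hu.
  assert (Hdd1 : d <= d1) by apply Rmin_l.
  assert (Hdd2 : d <= d2) by (eapply Rle_trans; [apply Rmin_r| apply Rmin_l]).
  assert (Hdd3 : d <= d3) by (eapply Rle_trans; [apply Rmin_r| apply Rmin_r]).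
  assert (E1 : ex_RInt (h u) a x) by (apply Hd3; lra).
  assert (E0 : ex_RInt (h u) a x0) by (apply Hd3; [lra| rewrite Rminus_eq_0, Rabs_R0; apply cond_pos]).
  assert (E2 : ex_RInt (h u) x0 x) by (apply (ex_RInt_Chasles (V := R_NormedModule)) with a; auto; apply (ex_RInt_swap (V := R_NormedModule)); auto).
  assert (Ch : RInt (h u) a x0 + RInt (h u) x0 x = RInt (h u) a x)
    by (apply (RInt_Chasles (V := R_CompleteNormedModule)); auto).
  assert (B1 : Rabs (RInt (h u) x0 x - h u0 x0 * (x - x0)) <= eps / 2 * Rabs (x - x0)).
  { apply int_approx; auto. intros t Ht. left. simpl in Hd1. apply Hd1. lra.
    apply Rle_lt_trans with (Rabs (x - x0)); [|lra].
    destruct (Rle_or_lt x0 x).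
    - rewrite Rmin_left, Rmax_right in Ht by lra. rewrite !Rabs_pos_eq; lra.
    - rewrite Rmin_right, Rmax_left in Ht by lra. rewrite !Rabs_left1; lra. }
  assert (B2 := Hd2 u ltac:(lra)). simpl in B2.
  replace (RInt (h u) a x - RInt (h u0) a x0 - (h u0 x0 * (x - x0) + c * (u - u0)))
    with ((RInt (h u) x0 x - h u0 x0 * (x - x0)) + (RInt (h u) a x0 - RInt (h u0) a x0 - c * (u - u0))) by lra.
  eapply Rle_trans. apply Rabs_triang.
  assert (Rabs (x - x0) <= Rmax (Rabs (x - x0)) (Rabs (u - u0))) by apply Rmax_l.
  assert (Rabs (u - u0) <= Rmax (Rabs (x - x0)) (Rabs (u - u0))) by apply Rmax_r.
  assert (Hep := cond_pos eps).
  assert (eps / 2 * Rabs (x - x0) <= eps / 2 * Rmax (Rabs (x - x0)) (Rabs (u - u0))) by (apply Rmult_le_compat_l; lra).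
  assert (eps / 2 * Rabs (u - u0) <= eps / 2 * Rmax (Rabs (x - x0)) (Rabs (u - u0))) by (apply Rmult_le_compat_l; lra).
  lra.
Qed.

Definition phi (z t : R) : R := -2 * acos (Rabs t) * (z / sqrt (1 - (z * t) ^ 2)).
Definition dphi (z t : R) : R := -2 * acos (Rabs t) / ((1 - (z * t) ^ 2) * sqrt (1 - (z * t) ^ 2)).

Lemma phi_deriv z t : 0 < 1 - (z * t) ^ 2 -> is_derive (fun z => phi z t) z (dphi z t).
Proof.
  intros H. unfold phi, dphi. auto_derive.
  - replace (1 + - (z * t * (z * t * 1))) with (1 - (z * t) ^ 2) by ring.
    split; [lra | split; [apply Rgt_not_eq, sqrt_lt_R0; lra | exact Logic.I]].
  - assert (Hs := sqrt_lt_R0 _ H). assert (Hss := sqrt_sqrt _ (Rlt_le _ _ H)).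
    set (s := sqrt (1 - (z * t) ^ 2)) in *.
    replace (1 + - (z * t * (z * t * 1))) with (1 - (z * t) ^ 2) by ring. fold s.
    rewrite Hss. field. split; lra.
Qed.

Lemma cont_g z t : continuity_2d_pt (fun z t => 1 - (z * t) ^ 2) z t.
Proof.
  apply continuity_2d_pt_ext with (fun z t => 1 - (z * t) * (z * t)).
  intros; ring.
  apply continuity_2d_pt_minus. apply continuity_2d_pt_const.
  assert (Hm : continuity_2d_pt (fun z t => z * t) z t)
    by (apply continuity_2d_pt_mult; [apply continuity_2d_pt_id1|apply continuity_2d_pt_id2]).
  apply continuity_2d_pt_mult; auto.
Qed.

Lemma cont_acosabs z t : continuity_2d_pt (fun _ t => acos (Rabs t)) z t.
Proof.
  apply continuity_1d_2d_pt_comp with (g := fun _ t => Rabs t).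
  apply acos_cont. assert (H := Rabs_pos t). lra.
  apply continuity_1d_2d_pt_comp with (g := fun _ t => t).
  apply Rcontinuity_abs. apply continuity_2d_pt_id2.
Qed.

Lemma cont_sqrtg z t : 0 < 1 - (z * t) ^ 2 ->
  continuity_2d_pt (fun z t => sqrt (1 - (z * t) ^ 2)) z t.
Proof.
  intros H. apply continuity_1d_2d_pt_comp with (g := fun z t => 1 - (z * t) ^ 2).
  apply continuity_pt_sqrt. lra. apply cont_g.
Qed.

Lemma phi_cont2 z t : 0 < 1 - (z * t) ^ 2 -> continuity_2d_pt phi z t.
Proof.
  intros H. unfold phi.
  apply continuity_2d_pt_mult.
  - apply continuity_2d_pt_mult. apply continuity_2d_pt_const. apply cont_acosabs.
  - unfold Rdiv. apply continuity_2d_pt_mult. apply continuity_2d_pt_id1.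
    apply continuity_2d_pt_inv. apply cont_sqrtg; auto.
    apply Rgt_not_eq, sqrt_lt_R0; auto.
Qed.

Lemma dphi_cont2 z t : 0 < 1 - (z * t) ^ 2 -> continuity_2d_pt dphi z t.
Proof.
  intros H. unfold dphi, Rdiv.
  apply continuity_2d_pt_mult.
  - apply continuity_2d_pt_mult. apply continuity_2d_pt_const. apply cont_acosabs.
  - apply continuity_2d_pt_inv.
    apply continuity_2d_pt_mult. apply cont_g. apply cont_sqrtg; auto.
    apply Rgt_not_eq, Rmult_lt_0_compat; auto. apply sqrt_lt_R0; auto.
Qed.

Lemma pos_open (f : R -> R -> R) x y : continuity_2d_pt f x y -> 0 < f x y ->
  locally_2d (fun u v => 0 < f u v) x y.
Proof.
  intros Hc Hp. destruct (Hc (mkposreal _ Hp)) as [d Hd].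
  exists d. intros u v Hu Hv. specialize (Hd u v Hu Hv). simpl in Hd.
  apply Rabs_lt_between in Hd. lra.
Qed.

Lemma good_open z t : 0 < 1 - (z * t) ^ 2 -> locally_2d (fun z t => 0 < 1 - (z * t) ^ 2) z t.
Proof. intros H. apply (pos_open (fun z t => 1 - (z * t) ^ 2)); auto. apply cont_g. Qed.

Lemma cont2_to_1 (f : R -> R -> R) z t : continuity_2d_pt f z t -> continuous (f z) t.
Proof.
  intros Hc. apply continuity_pt_filterlim.
  apply continuity_pt_locally. intros eps.
  destruct (Hc eps) as [d Hd].
  exists d. intros x Hx. apply Hd. rewrite Rminus_eq_0, Rabs_R0. apply cond_pos. exact Hx.
Qed.

Lemma cont2_to_1' (f : R -> R -> R) z t : continuity_2d_pt f z t -> continuity_pt (fun z => f z t) z.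
Proof.
  intros Hc. apply continuity_pt_locally. intros eps.
  destruct (Hc eps) as [d Hd].
  exists d. intros x Hx. apply Hd. exact Hx. rewrite Rminus_eq_0, Rabs_R0. apply cond_pos.
Qed.

Lemma locally_R_intro (x : R) (P : R -> Prop) :
  (exists d : posreal, forall y, Rabs (y - x) < d -> P y) -> locally x P.
Proof.
  intros [d Hd]. exists d. intros y Hy. apply Hd. exact Hy.
Qed.

Lemma loc2_to_1 (P : R -> R -> Prop) x y : locally_2d P x y -> locally x (fun u => P u y).
Proof.
  intros [d Hd]. apply locally_R_intro. exists d. intros u Hu. apply Hd; auto.
  rewrite Rminus_eq_0, Rabs_R0. apply cond_pos.
Qed.

Lemma good_between u y t : Rmin 0 y <= t <= Rmax 0 y -> 0 < 1 - (u * y) ^ 2 -> 0 < 1 - (u * t) ^ 2.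
Proof.
  intros Ht H.
  assert (t * t <= y * y).
  { destruct (Rle_or_lt 0 y).
    - rewrite Rmin_left, Rmax_right in Ht by lra. nra.
    - rewrite Rmin_right, Rmax_left in Ht by lra. nra. }
  assert ((u * t) ^ 2 <= (u * y) ^ 2).
  { replace ((u * t) ^ 2) with ((u * u) * (t * t)) by ring.
    replace ((u * y) ^ 2) with ((u * u) * (y * y)) by ring.
    apply Rmult_le_compat_l; nra. }
  lra.
Qed.

Lemma phi_ex u y : 0 < 1 - (u * y) ^ 2 -> ex_RInt (phi u) 0 y.
Proof.
  intros H. apply (ex_RInt_continuous (V := R_CompleteNormedModule)). intros t Ht.
  apply cont2_to_1. apply phi_cont2. eapply good_between; eauto.
Qed.

Lemma Derive_phi z t : 0 < 1 - (z * t) ^ 2 -> Derive (fun z => phi z t) z = dphi z t.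
Proof. intros H. apply is_derive_unique, phi_deriv; auto. Qed.

Lemma Phi_deriv u0 y0 : 0 < 1 - (u0 * y0) ^ 2 ->
  is_derive (fun u => RInt (phi u) 0 y0) u0 (RInt (dphi u0) 0 y0).
Proof.
  intros H.
  assert (Hloc : locally u0 (fun u => 0 < 1 - (u * y0) ^ 2)).
  { apply (loc2_to_1 (fun z t => 0 < 1 - (z * t) ^ 2)). apply good_open; auto. }
  replace (RInt (dphi u0) 0 y0) with (RInt (fun t => Derive (fun u => phi u t) u0) 0 y0).
  2:{ apply RInt_ext. intros t Ht. apply Derive_phi. eapply good_between; eauto.
      split; apply Rlt_le; apply Ht. }
  apply (is_derive_RInt_param (fun u t => phi u t)).
  - eapply filter_imp; [|exact Hloc]. intros u Hu t Ht. eexists. apply phi_deriv.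
    eapply good_between; eauto.
  - intros t Ht. assert (Hg : 0 < 1 - (u0 * t) ^ 2) by (eapply good_between; eauto).
    apply continuity_2d_pt_ext_loc with dphi.
    + eapply locally_2d_impl; [|apply good_open; exact Hg].
      apply locally_2d_forall. intros u v Huv. symmetry; apply Derive_phi; auto.
    + apply dphi_cont2; auto.
  - eapply filter_imp; [|exact Hloc]. intros u Hu. apply phi_ex; auto.
Qed.

Lemma Phi_diff u0 y0 : 0 < 1 - (u0 * y0) ^ 2 ->
  differentiable_pt_lim (fun y u => RInt (phi u) 0 y) y0 u0 (phi u0 y0) (RInt (dphi u0) 0 y0).
Proof.
  intros H. apply lemL.
  - destruct (good_open _ _ H) as [d Hd]. exists d. intros u x Hu Hx. apply phi_ex. apply Hd; auto.
  - apply phi_cont2; auto.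
  - apply Phi_deriv; auto.
Qed.

Lemma cos_pos_open y : - (PI / 2) < y < PI / 2 -> 0 < cos y.
Proof. intros H. apply cos_gt_0; lra. Qed.

Lemma subst_phi u r : 0 < u -> - (PI / 2) < r < PI / 2 ->
  I u 0 r = RInt (phi u) 0 (sin r / u).
Proof.
  intros Hu Hr.
  assert (Hin : forall x, Rmin 0 r <= x <= Rmax 0 r -> - (PI / 2) < x < PI / 2).
  { intros x Hx. assert (Hp := PI_RGT_0). destruct (Rle_or_lt 0 r).
    - rewrite Rmin_left, Rmax_right in Hx by lra. lra.
    - rewrite Rmin_right, Rmax_left in Hx by lra. lra. }
  replace (RInt (phi u) 0 (sin r / u)) with (RInt (phi u) (sin 0 / u) (sin r / u))
    by (rewrite sin_0; f_equal; field; lra).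
  rewrite <- (RInt_comp (V := R_CompleteNormedModule) (phi u) (fun y => sin y / u) (fun y => cos y / u)).
  - unfold I. apply RInt_ext. intros x Hx.
    assert (Hx' : - (PI / 2) < x < PI / 2) by (apply Hin; lra).
    assert (Hc := cos_pos_open x Hx').
    unfold scal; simpl; unfold mult; simpl. unfold phi, ft.
    replace (u * (sin x / u)) with (sin x) by (field; lra).
    replace (1 - sin x ^ 2) with (cos x ^ 2) by (rewrite <- (sin2_cos2 x); unfold Rsqr; ring).
    rewrite sqrt_pow2 by lra.
    rewrite Rabs_div by lra. rewrite (Rabs_pos_eq u) by lra.
    field. lra.
  - intros x Hx. apply cont2_to_1. apply phi_cont2.
    replace (u * (sin x / u)) with (sin x) by (field; lra).
    replace (1 - sin x ^ 2) with (cos x ^ 2) by (rewrite <- (sin2_cos2 x); unfold Rsqr; ring).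
    assert (Hc := cos_pos_open x (Hin x Hx)). nra.
  - intros x Hx. split.
    + auto_derive. lra. field. lra.
    + apply (ex_derive_continuous (K := R_AbsRing) (V := R_NormedModule) (fun y => cos y / u)). auto_derive. lra.
Qed.

Lemma ft_opp u s : ft (- u) s = ft u s.
Proof. unfold ft. rewrite Rabs_Ropp. reflexivity. Qed.

Lemma I_opp u a b : I (- u) a b = I u a b.
Proof. unfold I. apply RInt_ext. intros; apply ft_opp. Qed.

Lemma ex_derive_even (F : R -> R) u0 : (forall u, F (- u) = F u) ->
  (forall v, 0 < v -> ex_derive F v) -> u0 <> 0 -> ex_derive F u0.
Proof.
  intros He Hp Hu. destruct (Rlt_or_le 0 u0) as [H|H]; [apply Hp; auto|].
  assert (Hn : 0 < - u0) by lra.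
  destruct (Hp _ Hn) as [l Hl].
  exists (scal (-1) l).
  apply is_derive_ext with (fun u => F (- u)). intros; apply He.
  assert (Ho : is_derive (fun u : R => - u) u0 (-1)) by (auto_derive; auto; ring).
  exact (is_derive_comp F (fun u => - u) u0 l (-1) Hl Ho).
Qed.

Lemma Ir_deriv r u0 : - (PI / 2) < r < PI / 2 -> u0 <> 0 -> ex_derive (fun u => I u 0 r) u0.
Proof.
  intros Hr Hu. apply ex_derive_even; auto. intros; apply I_opp.
  clear u0 Hu. intros u0 Hu.
  assert (Hc := cos_pos_open r Hr).
  assert (Hg : 0 < 1 - (u0 * (sin r / u0)) ^ 2).
  { replace (u0 * (sin r / u0)) with (sin r) by (field; lra).
    replace (1 - sin r ^ 2) with (cos r ^ 2) by (rewrite <- (sin2_cos2 r); unfold Rsqr; ring). nra. }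
  assert (Hd := Phi_diff _ _ Hg).
  assert (H2 : derivable_pt_lim (fun u => sin r / u) u0 (- sin r / u0 ^ 2)).
  { apply is_derive_Reals. auto_derive. lra. field. lra. }
  assert (H3 : derivable_pt_lim (fun u => u) u0 1) by apply derivable_pt_lim_id.
  assert (H := derivable_pt_lim_comp_2d _ _ _ _ _ _ _ _ Hd H2 H3).
  eexists. apply is_derive_Reals in H.
  apply is_derive_ext_loc with (fun t => RInt (phi t) 0 (sin r / t)); [|exact H].
  apply locally_R_intro. exists (mkposreal u0 Hu). intros y Hy. simpl in Hy.
  apply Rabs_lt_between in Hy. symmetry. apply subst_phi; lra.
Qed.

Lemma acos_deriv x : -1 < x < 1 -> is_derive acos x (- 1 / sqrt (1 - x ^ 2)).
Proof.
  intros H. apply is_derive_Reals.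
  apply derive_pt_eq_1 with (derivable_pt_acos x H).
  rewrite derive_pt_acos. unfold Rsqr. f_equal. f_equal. f_equal. ring.
Qed.

Definition dft (z t : R) : R :=
  -2 * (- 1 / sqrt (1 - (Rabs (sin t) / z) ^ 2)) * (- Rabs (sin t) / (z * z)).

Lemma ratio_bound z t : 1 < z -> 0 <= Rabs (sin t) / z < 1.
Proof.
  intros Hz. assert (Hs := Rabs_pos (sin t)). assert (Hs1 : Rabs (sin t) <= 1) by apply Rabs_le, SIN_bound.
  split. apply Rdiv_le_0_compat; lra.
  apply Rmult_lt_reg_r with z. lra. unfold Rdiv. rewrite Rmult_assoc, Rinv_l by lra. lra.
Qed.

Lemma ft_deriv z t : 1 < z -> is_derive (fun z => ft z t) z (dft z t).
Proof.
  intros Hz. unfold ft, dft.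
  apply is_derive_ext_loc with (fun z => -2 * acos (Rabs (sin t) / z)).
  { apply locally_R_intro. exists (mkposreal (z - 1) ltac:(lra)). intros y Hy. simpl in Hy.
    apply Rabs_lt_between in Hy. rewrite (Rabs_pos_eq y) by lra. reflexivity. }
  assert (Hb := ratio_bound z t Hz).
  replace (-2 * (- 1 / sqrt (1 - (Rabs (sin t) / z) ^ 2)) * (- Rabs (sin t) / (z * z)))
    with (-2 * ((- Rabs (sin t) / (z * z)) * (- 1 / sqrt (1 - (Rabs (sin t) / z) ^ 2)))) by ring.
  apply (is_derive_scal (fun z => acos (Rabs (sin t) / z))).
  apply (is_derive_comp acos (fun z => Rabs (sin t) / z)).
  apply acos_deriv; lra.
  auto_derive. lra. field. lra.
Qed.

Lemma cont_q z t : z <> 0 -> continuity_2d_pt (fun z t => Rabs (sin t) / z) z t.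
Proof.
  intros Hz. unfold Rdiv. apply continuity_2d_pt_mult.
  - apply continuity_1d_2d_pt_comp with (g := fun u s => sin s).
    apply Rcontinuity_abs.
    apply continuity_1d_2d_pt_comp with (g := fun u s => s).
    apply continuity_sin. apply continuity_2d_pt_id2.
  - apply continuity_2d_pt_inv. apply continuity_2d_pt_id1. auto.
Qed.

Lemma dft_cont2 z t : 1 < z -> continuity_2d_pt dft z t.
Proof.
  intros Hz. assert (Hb := ratio_bound z t Hz). unfold dft.
  assert (Hq := cont_q z t ltac:(lra)).
  assert (Hg : 0 < 1 - (Rabs (sin t) / z) ^ 2) by nra.
  apply continuity_2d_pt_mult.
  - apply continuity_2d_pt_mult. apply continuity_2d_pt_const.
    unfold Rdiv. apply continuity_2d_pt_mult. apply continuity_2d_pt_const.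
    apply continuity_2d_pt_inv; [| apply Rgt_not_eq, sqrt_lt_R0; auto].
    apply continuity_1d_2d_pt_comp with (g := fun z t => 1 - (Rabs (sin t) / z) ^ 2).
    apply continuity_pt_sqrt; lra.
    apply continuity_2d_pt_ext with (fun z t => 1 - (Rabs (sin t) / z) * (Rabs (sin t) / z)).
    intros; ring.
    apply continuity_2d_pt_minus. apply continuity_2d_pt_const. apply continuity_2d_pt_mult; auto.
  - unfold Rdiv. apply continuity_2d_pt_mult.
    + apply continuity_2d_pt_opp.
      apply continuity_1d_2d_pt_comp with (g := fun u s => sin s).
      apply Rcontinuity_abs.
      apply continuity_1d_2d_pt_comp with (g := fun u s => s).
      apply continuity_sin. apply continuity_2d_pt_id2.
    + apply continuity_2d_pt_inv. apply continuity_2d_pt_mult; apply continuity_2d_pt_id1. nra.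
Qed.

Lemma Derive_ft z t : 1 < z -> Derive (fun z => ft z t) z = dft z t.
Proof. intros H. apply is_derive_unique, ft_deriv; auto. Qed.

Lemma P_deriv_gt u0 : 1 < u0 -> ex_derive (fun u => I u 0 (PI / 2)) u0.
Proof.
  intros Hu. eexists. unfold I.
  apply (is_derive_RInt_param (fun u t => ft u t)).
  - apply locally_R_intro. exists (mkposreal (u0 - 1) ltac:(lra)). intros y Hy t Ht. simpl in Hy.
    apply Rabs_lt_between in Hy. eexists. apply ft_deriv. lra.
  - intros t Ht. apply continuity_2d_pt_ext_loc with dft.
    + exists (mkposreal (u0 - 1) ltac:(lra)). intros u v Hu' Hv. simpl in Hu'.
      apply Rabs_lt_between in Hu'. symmetry; apply Derive_ft. lra.
    + apply dft_cont2; auto.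
  - apply locally_R_intro. exists (mkposreal (u0 - 1) ltac:(lra)). intros y Hy. simpl in Hy.
    apply Rabs_lt_between in Hy. apply ft_ex. lra.
Qed.

Lemma asin_in u : 0 < u < 1 -> 0 < asin u < PI / 2.
Proof.
  intros H. assert (Hb := asin_bound_lt u ltac:(lra)).
  assert (Hs := sin_asin u ltac:(lra)).
  split; [|lra].
  destruct (Rlt_or_le 0 (asin u)) as [H0|H0]; auto.
  destruct H0 as [H0|H0].
  - assert (sin (asin u) < sin 0) by (apply sin_increasing_1; lra). rewrite sin_0 in H1. lra.
  - rewrite H0, sin_0 in Hs. lra.
Qed.

Lemma P_small u : 0 < u < 1 -> I u 0 (PI / 2) = RInt (phi u) 0 1.
Proof.
  intros Hu. assert (Ha := asin_in u Hu).
  assert (Hs := sin_asin u ltac:(lra)).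
  rewrite <- (I_chasles u 0 (asin u) (PI / 2)) by lra.
  rewrite subst_phi by lra. rewrite Hs.
  replace (u / u) with 1 by (field; lra).
  replace (I u (asin u) (PI / 2)) with 0. ring.
  unfold I. rewrite (RInt_ext _ (fun _ => 0)).
  - rewrite (RInt_const (V := R_CompleteNormedModule)). unfold scal; simpl; unfold mult; simpl. ring.
  - intros x Hx. rewrite Rmin_left, Rmax_right in Hx by lra.
    assert (u < sin x).
    { rewrite <- Hs. apply sin_increasing_1; lra. }
    unfold ft. rewrite acos_ge1. apply Rmult_0_r.
    rewrite Rabs_pos_eq by lra. rewrite Rabs_pos_eq by lra.
    apply Rmult_le_reg_r with u. lra. unfold Rdiv. rewrite Rmult_assoc, Rinv_l by lra. lra.
Qed.

Lemma P_deriv_pos u0 : 0 < u0 -> u0 <> 1 -> ex_derive (fun u => I u 0 (PI / 2)) u0.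
Proof.
  intros H0 H1. destruct (Rlt_or_le 1 u0) as [H|H]. apply P_deriv_gt; auto.
  assert (Hlt : u0 < 1) by lra.
  eexists. apply is_derive_ext_loc with (fun u => RInt (phi u) 0 1).
  - apply locally_R_intro. exists (mkposreal (Rmin u0 (1 - u0)) ltac:(apply Rmin_glb_lt; lra)).
    intros y Hy. simpl in Hy. assert (Rmin u0 (1 - u0) <= u0) by apply Rmin_l.
    assert (Rmin u0 (1 - u0) <= 1 - u0) by apply Rmin_r.
    apply Rabs_lt_between in Hy. symmetry. apply P_small. lra.
  - apply Phi_deriv. nra.
Qed.

Lemma ex_derive_even' (F : R -> R) u0 : (forall u, F (- u) = F u) ->
  ex_derive F (- u0) -> ex_derive F u0.
Proof.
  intros He [l Hl].
  exists (scal (-1) l).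
  apply is_derive_ext with (fun u => F (- u)). intros; apply He.
  assert (Ho : is_derive (fun u : R => - u) u0 (-1)) by (auto_derive; auto; ring).
  exact (is_derive_comp F (fun u => - u) u0 l (-1) Hl Ho).
Qed.

Lemma P_deriv u0 : u0 <> 0 -> u0 <> 1 -> u0 <> -1 -> ex_derive (fun u => I u 0 (PI / 2)) u0.
Proof.
  intros H0 H1 H2. destruct (Rlt_or_le 0 u0) as [H|H].
  - apply P_deriv_pos; auto.
  - apply ex_derive_even'; [intros; apply I_opp |].
    apply P_deriv_pos; lra.
Qed.

Lemma I_bound u a b : u <> 0 -> a <= b -> Rabs (I u a b) <= (b - a) * (2 * PI).
Proof.
  intros Hu Hab. unfold I. apply abs_RInt_le_const; auto. apply ft_ex; auto.
  intros; apply ft_bound.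
Qed.

Lemma I_bound_abs u a b : u <> 0 -> Rabs (I u a b) <= Rabs (b - a) * (2 * PI).
Proof.
  intros Hu. destruct (Rle_or_lt a b).
  - rewrite (Rabs_pos_eq (b - a)) by lra. apply I_bound; auto.
  - assert (E := I_chasles u a b a Hu). rewrite I_point in E.
    replace (I u a b) with (- I u b a) by lra. rewrite Rabs_Ropp, (Rabs_left (b - a)) by lra.
    replace (- (b - a)) with (a - b) by ring. apply I_bound; lra.
Qed.

Lemma ex_derive_cpt (f : R -> R) x : ex_derive f x -> continuity_pt f x.
Proof.
  intros H. apply continuity_pt_filterlim. apply (ex_derive_continuous (K := R_AbsRing) (V := R_NormedModule)). exact H.
Qed.

Lemma P_cont u0 : u0 <> 0 -> continuity_pt (fun u => I u 0 (PI / 2)) u0.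
Proof.
  intros Hu. assert (Hp := PI_RGT_0).
  apply continuity_pt_locally. intros eps.
  assert (He := cond_pos eps).
  set (eta := Rmin (eps / (8 * PI)) (PI / 4)).
  assert (Heta : 0 < eta) by (unfold eta; apply Rmin_glb_lt; [apply Rdiv_lt_0_compat; lra| lra]).
  assert (Heta1 : eta <= eps / (8 * PI)) by apply Rmin_l.
  assert (Heta2 : eta <= PI / 4) by apply Rmin_r.
  set (a := PI / 2 - eta).
  assert (Hc := ex_derive_cpt _ _ (Ir_deriv a u0 ltac:(unfold a; lra) Hu)).
  assert (He2 : 0 < eps / 2) by lra.
  assert (Hc' := proj1 (continuity_pt_locally (fun u => I u 0 a) u0) Hc (mkposreal _ He2)).
  clear Hc. rename Hc' into Hc.
  assert (Hnz : locally u0 (fun u => u <> 0)).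
  { apply locally_R_intro. exists (mkposreal (Rabs u0) ltac:(apply Rabs_pos_lt; auto)).
    intros y Hy E. subst. simpl in Hy. rewrite Rminus_0_l, Rabs_Ropp in Hy. lra. }
  eapply filter_imp; [|apply filter_and; [exact Hc| exact Hnz]].
  intros u [H1 H2]. simpl in H1.
  rewrite <- (I_chasles u 0 a (PI/2)) by auto. rewrite <- (I_chasles u0 0 a (PI/2)) by auto.
  assert (B1 := I_bound u a (PI/2) H2 ltac:(unfold a; lra)).
  assert (B2 := I_bound u0 a (PI/2) Hu ltac:(unfold a; lra)).
  replace (PI / 2 - a) with eta in B1, B2 by (unfold a; ring).
  assert (eta * (2 * PI) <= eps / 4).
  { apply Rle_trans with (eps / (8 * PI) * (2 * PI)). apply Rmult_le_compat_r; lra.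
    right; field; lra. }
  apply Rabs_lt_between in H1. apply Rabs_le_between in B1. apply Rabs_le_between in B2.
  apply Rabs_lt_between. lra.
Qed.

Lemma reduce l0 : exists r k, - (PI / 2) <= r < PI / 2 /\
  forall u, u <> 0 -> I u 0 l0 = I u 0 r + IZR k * (2 * I u 0 (PI / 2)).
Proof.
  assert (Hp := PI_RGT_0).
  set (k := Zfloor ((l0 + PI / 2) / PI)).
  exists (l0 - IZR k * PI), k.
  destruct (Zfloor_bound ((l0 + PI / 2) / PI)) as [H1 H2]. fold k in H1, H2.
  apply Rmult_le_compat_r with (r := PI) in H1; [|lra].
  apply Rmult_lt_compat_r with (r := PI) in H2; [|lra].
  replace ((l0 + PI / 2) / PI * PI) with (l0 + PI / 2) in H1, H2 by (field; lra).
  split. lra.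
  intros u Hu. rewrite <- (I_periodk u (l0 - IZR k * PI) k Hu).
  replace (l0 - IZR k * PI + IZR k * PI) with l0 by ring.
  symmetry; apply (I_chasles u 0 (l0 - IZR k * PI) l0); auto.
Qed.

Lemma nz_loc u0 : u0 <> 0 -> locally u0 (fun u => u <> 0).
Proof.
  intros Hu. apply locally_R_intro. exists (mkposreal (Rabs u0) ltac:(apply Rabs_pos_lt; auto)).
  intros y Hy E. subst. simpl in Hy. rewrite Rminus_0_l, Rabs_Ropp in Hy. lra.
Qed.



Lemma G_deriv l0 u0 : u0 <> 0 -> u0 <> 1 -> u0 <> -1 -> ex_derive (fun u => I u 0 l0) u0.
Proof.
  intros H0 H1 H2. destruct (reduce l0) as [r [k [Hr Hid]]].
  apply ex_derive_ext_loc with (fun u => I u 0 r + IZR k * (2 * I u 0 (PI / 2))).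
  { eapply filter_imp; [|apply nz_loc; exact H0]. intros u Hu. symmetry; apply Hid; auto. }
  apply (ex_derive_plus (K := R_AbsRing) (V := R_NormedModule) (fun u => I u 0 r)).
  - destruct (Req_dec r (- (PI / 2))) as [E|E].
    + subst r. apply ex_derive_ext_loc with (fun u => - I u 0 (PI / 2)).
      { eapply filter_imp; [|apply nz_loc; exact H0]. intros u Hu.
        replace (I u 0 (- (PI / 2))) with (I u (- 0) (- (PI / 2))) by (f_equal; ring).
        rewrite I_neg by auto. reflexivity. }
      apply (ex_derive_opp (K := R_AbsRing) (V := R_NormedModule) (fun u => I u 0 (PI / 2))). apply P_deriv; auto.
    + apply Ir_deriv; auto. lra.
  - apply ex_derive_scal. apply ex_derive_scal. apply P_deriv; auto.
Qed.

Lemma cpt_plus (f g : R -> R) x : continuity_pt f x -> continuity_pt g x ->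
  continuity_pt (fun y => f y + g y) x.
Proof. intros; apply continuity_pt_plus; auto. Qed.

Lemma cpt_scal (f : R -> R) c x : continuity_pt f x -> continuity_pt (fun y => c * f y) x.
Proof. intros; apply continuity_pt_mult; auto. apply continuity_pt_const. intros a b; auto. Qed.

Lemma G_cont l0 u0 : u0 <> 0 -> continuity_pt (fun u => I u 0 l0) u0.
Proof.
  intros H0. destruct (reduce l0) as [r [k [Hr Hid]]].
  apply continuity_pt_ext_loc with (fun u => I u 0 r + IZR k * (2 * I u 0 (PI / 2))).
  { eapply filter_imp; [|apply nz_loc; exact H0]. intros u Hu. symmetry; apply Hid; auto. }
  apply cpt_plus.
  - destruct (Req_dec r (- (PI / 2))) as [E|E].
    + subst r. apply continuity_pt_ext_loc with (fun u => - I u 0 (PI / 2)).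
      { eapply filter_imp; [|apply nz_loc; exact H0]. intros u Hu.
        replace (I u 0 (- (PI / 2))) with (I u (- 0) (- (PI / 2))) by (f_equal; ring).
        rewrite I_neg by auto. reflexivity. }
      apply continuity_pt_opp. apply P_cont; auto.
    + apply ex_derive_cpt. apply Ir_deriv; auto. lra.
  - apply cpt_scal. apply cpt_scal. apply P_cont; auto.
Qed.

Lemma V_decomp l u : u <> 0 -> V l u = / 2 * (I u 0 (PI / 2) - I u 0 l).
Proof.
  intros Hu. rewrite V_I by auto.
  assert (H := I_chasles u 0 l (PI / 2) Hu). rewrite <- H. ring.
Qed.

Definition hV (u t : R) : R := - / 2 * ft u t.

Lemma hV_cont2 u t : u <> 0 -> continuity_2d_pt hV u t.
Proof. intros Hu. unfold hV. apply continuity_2d_pt_mult. apply continuity_2d_pt_const. apply ft_cont2; auto. Qed.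

Lemma hV_ex u a b : u <> 0 -> ex_RInt (hV u) a b.
Proof.
  intros Hu. apply (ex_RInt_continuous (V := R_CompleteNormedModule)). intros.
  apply cont2_to_1. apply hV_cont2; auto.
Qed.

Lemma V_hV l u : u <> 0 -> V l u = RInt (hV u) (PI / 2) l.
Proof.
  intros Hu. unfold hV. rewrite (I_scal u (PI/2) l (- / 2) Hu). rewrite V_I by auto.
  assert (H := I_chasles u (PI / 2) l (PI / 2) Hu). rewrite I_point in H. lra.
Qed.

Lemma Vu_deriv l0 u0 : u0 <> 0 -> u0 <> 1 -> u0 <> -1 -> ex_derive (fun u => V l0 u) u0.
Proof.
  intros H0 H1 H2.
  apply ex_derive_ext_loc with (fun u => / 2 * (I u 0 (PI / 2) - I u 0 l0)).
  { eapply filter_imp; [|apply nz_loc; exact H0]. intros u Hu. symmetry; apply V_decomp; auto. }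
  apply ex_derive_scal.
  apply (ex_derive_minus (K := R_AbsRing) (V := R_NormedModule) (fun u => I u 0 (PI / 2))).
  apply P_deriv; auto. apply G_deriv; auto.
Qed.

Lemma Vu_cont l0 u0 : u0 <> 0 -> continuity_pt (fun u => V l0 u) u0.
Proof.
  intros H0.
  apply continuity_pt_ext_loc with (fun u => / 2 * (I u 0 (PI / 2) - I u 0 l0)).
  { eapply filter_imp; [|apply nz_loc; exact H0]. intros u Hu. symmetry; apply V_decomp; auto. }
  apply cpt_scal. apply continuity_pt_minus. apply P_cont; auto. apply G_cont; auto.
Qed.

Lemma V_diff l0 u0 : u0 <> 0 -> u0 <> 1 -> u0 <> -1 ->
  exists a b, differentiable_pt_lim V l0 u0 a b.
Proof.
  intros H0 H1 H2.
  destruct (Vu_deriv l0 u0 H0 H1 H2) as [c Hc].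
  exists (hV u0 l0), c.
  assert (Hnz : locally_2d (fun l u => u <> 0) l0 u0).
  { exists (mkposreal (Rabs u0) ltac:(apply Rabs_pos_lt; auto)). intros l u _ Hu E. subst.
    simpl in Hu. rewrite Rminus_0_l, Rabs_Ropp in Hu. lra. }
  apply differentiable_pt_lim_ext with (fun x u => RInt (hV u) (PI / 2) x).
  { eapply locally_2d_impl; [|exact Hnz]. apply locally_2d_forall. intros l u Hu.
    symmetry; apply V_hV; auto. }
  apply lemL.
  - exists (mkposreal (Rabs u0) ltac:(apply Rabs_pos_lt; auto)). intros u x Hu _.
    apply hV_ex. intro E. subst. simpl in Hu. rewrite Rminus_0_l, Rabs_Ropp in Hu. lra.
  - apply hV_cont2; auto.
  - apply is_derive_ext_loc with (fun u => V l0 u); auto.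
    eapply filter_imp; [|apply nz_loc; exact H0]. intros u Hu. apply V_hV; auto.
Qed.

Lemma V_cont2 l0 u0 : u0 <> 0 -> continuity_2d_pt V l0 u0.
Proof.
  intros H0 eps. assert (He := cond_pos eps). assert (Hp := PI_RGT_0).
  assert (He2 : 0 < eps / 2) by lra.
  assert (Hc := proj1 (continuity_pt_locally (fun u => V l0 u) u0) (Vu_cont l0 u0 H0) (mkposreal _ He2)).
  destruct Hc as [d1 Hd1].
  set (d := Rmin d1 (Rmin (Rabs u0) (eps / (4 * PI)))).
  assert (Hd : 0 < d).
  { unfold d. apply Rmin_glb_lt. apply cond_pos. apply Rmin_glb_lt. apply Rabs_pos_lt; auto.
    apply Rdiv_lt_0_compat; lra. }
  exists (mkposreal d Hd). intros l u Hl Hu. simpl in Hl, Hu.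
  assert (Hdd1 : d <= d1) by apply Rmin_l.
  assert (Hdd2 : d <= Rabs u0) by (eapply Rle_trans; [apply Rmin_r| apply Rmin_l]).
  assert (Hdd3 : d <= eps / (4 * PI)) by (eapply Rle_trans; [apply Rmin_r| apply Rmin_r]).
  assert (Hu0 : u <> 0).
  { intro E. subst. rewrite Rminus_0_l, Rabs_Ropp in Hu. lra. }
  assert (B1 : Rabs (V l0 u - V l0 u0) < eps / 2).
  { apply Hd1. apply Rlt_le_trans with d; auto. }
  assert (B2 : Rabs (V l u - V l0 u) <= eps / 2).
  { rewrite !V_I by auto.
    assert (H := I_chasles u l l0 (PI / 2) Hu0).
    replace (/ 2 * I u l (PI / 2) - / 2 * I u l0 (PI / 2)) with (/ 2 * I u l l0) by lra.
    rewrite Rabs_mult, Rabs_pos_eq by lra.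
    assert (Hb := I_bound_abs u l l0 Hu0).
    assert (Rabs (l0 - l) < eps / (4 * PI)) by (rewrite Rabs_minus_sym; lra).
    assert (Rabs (l0 - l) * (2 * PI) <= eps / (4 * PI) * (2 * PI)) by (apply Rmult_le_compat_r; lra).
    replace (eps / (4 * PI) * (2 * PI)) with (eps / 2) in H2 by (field; lra).
    lra. }
  replace (V l u - V l0 u0) with ((V l u - V l0 u) + (V l0 u - V l0 u0)) by ring.
  eapply Rle_lt_trans. apply Rabs_triang. lra.
Qed.

Lemma V2_cont p : snd p <> 0 -> continuous V2 p.
Proof.
  destruct p as [l u]. simpl. intros Hu.
  apply (proj1 (continuity_2d_pt_filterlim V l u)). apply V_cont2; auto.
Qed.

Lemma V2_diff p : snd p <> 0 -> snd p <> 1 -> snd p <> -1 -> ex_filterdiff V2 (locally p).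
Proof.
  destruct p as [l u]. simpl. intros H0 H1 H2.
  destruct (V_diff l u H0 H1 H2) as [a [b Hd]].
  eexists. apply (proj2 (filterdiff_differentiable_pt_lim V l u a b)). exact Hd.
Qed.

Definition cc (n : nat) : R := if Nat.even n then 1 else -1.

Lemma sum_zero (f : nat -> R) N : (forall n, f n = 0) -> sum_f_R0 f N = 0.
Proof. intros H. induction N; simpl; rewrite H; [reflexivity| rewrite IHN; ring]. Qed.

Lemma null_part : null2 (fun p : R * R => snd p <> 0 /\ ~ ex_filterdiff V2 (locally p)).
Proof.
  intros eps Heps.
  exists (fun n => - INR n), (fun n => INR n), cc, cc.
  split; [|split].
  - intros n. split; [|lra]. assert (H := pos_INR n). lra.
  - intros [l u] [H0 Hnd]. simpl in *.
    destruct (nfloor_ex (Rabs l) (Rabs_pos l)) as [N HN].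
    assert (Hl : - INR (S N) <= l <= INR (S N)).
    { rewrite S_INR. apply Rabs_le_between. lra. }
    assert (Hl2 : forall m, (S N <= m)%nat -> - INR m <= l <= INR m).
    { intros m Hm. apply le_INR in Hm. lra. }
    destruct (Req_dec u 1) as [E1|E1].
    + exists (2 * S N)%nat. split. apply Hl2; lia.
      unfold cc. rewrite Nat.even_mul. simpl. lra.
    + destruct (Req_dec u (-1)) as [E2|E2].
      * exists (S (2 * S N))%nat. split. apply Hl2; lia.
        unfold cc. rewrite Nat.even_succ, Nat.odd_mul. simpl. lra.
      * exfalso. apply Hnd. apply (V2_diff (l, u)); simpl; auto.
  - intros N. rewrite sum_zero. lra. intros n. ring.
Qed.

Theorem lemma7 :
  ((forall p : R * R, snd p <> 0 -> continuous V2 p) /\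
   null2 (fun p : R * R => snd p <> 0 /\ ~ ex_filterdiff V2 (locally p))) /\
  (forall (l u : R), u <> 0 ->
     V l u = V l (- u) /\
     V (PI - l) u = - V l u /\
     V l u + V (- l) u = 2 * V 0 u /\
     (forall k : Z, V (l + IZR k * PI) u = V l u - 2 * IZR k * V 0 u)).
Proof.
  split; [split|].
  - exact V2_cont.
  - exact null_part.
  - intros l u Hu. split; [apply part_ii|]. split; [apply part_iii; auto|].
    split; [apply part_iv; auto|]. intros k; apply part_v; auto.
Qed.
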